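(* Let $X$ be an $X$-set parameter and let $G$ and $G'$ be graphs with no isolated vertices. Suppose $\varphi:\mathscr{X}^{\rm TAR}(G)\to\mathscr{X}^{\rm TAR}(G')$ is a graph isomorphism such that $|\varphi(S)|=|S|$ for every $X$-set $S$ of $G$. Then $\varphi$ maps minimal $X$-sets of $G$ to minimal $X$-sets of $G'$ of the same size.
   Context: All graphs are simple, finite, with nonempty vertex set. An $X$-set parameter is a graph parameter $X(G)$ defined as the minimum cardinality of an $X$-set of $G$, where the $X$-sets of each graph are subsets of its vertex set determined by some property satisfying: (1) supersets (within $V(G)$) of $X$-sets are $X$-sets; (2) the empty set is never an $X$-set; (3) an $X$-set of a disconnected graph is the union of an $X$-set of each component; (4) if $G$ has no isolated vertices, every set of $|V(G)|-1$ vertices is an $X$-set. The $X$-TAR graph $\mathscr{X}^{\rm TAR}(G)$ has as vertices all $X$-sets of $G$, with $S_1,S_2$ adjacent iff $|S_1\ominus S_2|=1$ (symmetric difference). A minimal $X$-set is one containing no proper subset that is an $X$-set. *)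

(* Defs.v *)
From mathcomp Require Import all_boot.
Set Implicit Arguments. Unset Strict Implicit. Unset Printing Implicit Defensive.

Record sgraph := SGraph {
  vtx : finType;
  adj : rel vtx;
  adj_sym : symmetric adj;
  adj_irr : irreflexive adj }.

Arguments adj : clear implicits.
Definition induced (G : sgraph) (C : {set vtx G}) : sgraph :=
  @SGraph {x : vtx G | x \in C} (fun u v => adj G (val u) (val v))
    (fun u v => @adj_sym G (val u) (val v)) (fun u => @adj_irr G (val u)).

Arguments induced : clear implicits.
Definition component (G : sgraph) (x : vtx G) : {set vtx G} :=
  [set y | connect (adj G) x y].

Definition connectedb (G : sgraph) : bool :=
  [forall x, forall y, connect (adj G) x y].

Definition no_isolated (G : sgraph) : bool :=
  [forall x : vtx G, [exists y, adj G x y]].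

Definition restrict (G : sgraph) (C : {set vtx G}) (S : {set vtx G})
  : {set vtx (induced G C)} := [set u : vtx (induced G C) | val u \in S].

Definition Xfamily := forall G : sgraph, pred {set vtx G}.

Definition Xparam (X : Xfamily) : Prop :=
  (forall G : sgraph, 0 < #|vtx G| ->
     forall S T : {set vtx G}, S \subset T -> X G S -> X G T) /\
  (forall G : sgraph, 0 < #|vtx G| -> ~~ X G set0) /\
  (* (3) in a disconnected graph, X-sets are exactly unions of X-sets of the components *)
  (forall G : sgraph, 0 < #|vtx G| -> ~~ connectedb G ->
     forall S : {set vtx G},
       X G S = [forall x, X (induced G (component x)) (@restrict G (component x) S)]) /\
  (forall G : sgraph, 0 < #|vtx G| -> no_isolated G ->
     forall S : {set vtx G}, #|S| = #|vtx G| - 1 -> X G S).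

Definition TARv (X : Xfamily) (G : sgraph) := {S : {set vtx G} | X G S}.

Definition TARadj (X : Xfamily) (G : sgraph) (S T : TARv X G) : bool :=
  #|(val S :\: val T) :|: (val T :\: val S)| == 1.

Definition minimalX (X : Xfamily) (G : sgraph) (S : {set vtx G}) : bool :=
  X G S && [forall T : {set vtx G}, (T \proper S) ==> ~~ X G T].

(* Main.v *)
Require Import Defs.
From mathcomp Require Import all_boot.

Lemma symdiff1_proper (T : finType) (A B : {set T}) :
  #|(A :\: B) :|: (B :\: A)| == 1 -> #|B| < #|A| -> B \proper A.
Proof.
move=> /cards1P [x Hx] Hlt.
have HBA : B \subset A.
  apply/subsetP => y yB; apply/negPn/negP => yA.
  have : y \in (A :\: B) :|: (B :\: A) by rewrite !inE yA yB orbT.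
  rewrite Hx inE => /eqP Eyx; subst y.
  have HAB : A \subset B.
    apply/subsetP => z zA; apply/negPn/negP => zB.
    have : z \in (A :\: B) :|: (B :\: A) by rewrite !inE zA zB.
    rewrite Hx inE => /eqP Ezx; subst z; by rewrite zA in yA.
  by move: (subset_leq_card HAB); rewrite leqNgt Hlt.
by rewrite properEcard HBA Hlt.
Qed.

Theorem proposition2p14 (X : Xfamily) (HX : Xparam X)
  (G G' : sgraph) (hG : 0 < #|vtx G|) (hG' : 0 < #|vtx G'|)
  (nG : no_isolated G) (nG' : no_isolated G')
  (phi : TARv X G -> TARv X G')
  (phi_bij : bijective phi)
  (phi_adj : forall S T : TARv X G, TARadj (phi S) (phi T) = TARadj S T)
  (phi_card : forall S : TARv X G, #|val (phi S)| = #|val S|) :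
  forall S : TARv X G, minimalX X (val S) ->
    minimalX X (val (phi S)) /\ #|val (phi S)| = #|val S|.
Proof.
move=> S /andP [_ /forallP minS]; split; last exact: phi_card.
case: HX => Hsup _.
rewrite /minimalX (valP (phi S)) /=; apply/forallP => T'; apply/implyP => HT'.
apply/negP => XT'.
case/properP: HT' => sub [v vA vT'].
set A := val (phi S) in sub vA vT'.
have subU : T' \subset A :\ v.
  apply/subsetP => y yT; rewrite !inE (subsetP sub _ yT) andbT.
  by apply/eqP => E; subst y; rewrite yT in vT'.
have XU : X G' (A :\ v) by apply: (Hsup G' hG' _ _ subU XT').
pose U' := exist (fun U => X G' U) (A :\ v) XU : TARv X G'.
case: phi_bij => g phiK gK.
pose W := g U'.
have EW : phi W = U' by rewrite /W gK.
have adjW : TARadj S W.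
  rewrite -phi_adj EW /TARadj /=.
  apply/cards1P; exists v; apply/setP => y; rewrite !inE.
  case: (y =P v) => [->|_] /=; rewrite ?vA ?andbF ?andbT ?orbF //=.
  change (sval (phi S)) with A; by case: (y \in A).
have ltW : #|val W| < #|val S|.
  rewrite -(phi_card W) -(phi_card S) EW /= /A (cardsD1 v (val (phi S))) vA.
  by rewrite add1n ltnSn.
have := minS (val W); rewrite (@symdiff1_proper _ (val S) (val W) adjW ltW) /= (valP W).
by [].
Qed.
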